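(* Let $b$ be a Baer subline of $\ell_\infty$ in $\mathrm{PG}(2,q^2)$, and let $\bar P,\bar Q\in\ell_\infty$ be distinct points that are conjugate with respect to $b$. Then in $\mathrm{PG}(4,q^2)$ the lines $PQ^q$ and $P^qQ$ are lines of the extended regulus $[b]^\star$.
   Context: Bruck–Bose setting: $q$ a prime power; $\Sigma_\infty$ a hyperplane of $\mathrm{PG}(4,q)$ with a regular spread $\mathcal S$ whose lines $[T]$ correspond to the points $\bar T\in\ell_\infty$ of $\mathrm{PG}(2,q^2)$. In $\mathrm{PG}(4,q^2)$ the transversals of $\mathcal S$ are the two conjugate lines $g,g^q$ (conjugation $X\mapsto X^q$ on coordinates) such that for each $\bar T\in\ell_\infty$, with $T:=[T]^\star\cap g$, the extended spread line is $[T]^\star=TT^q$; this gives a bijection $\bar T\leftrightarrow T$ between $\ell_\infty$ and $g$. A Baer subline $b$ of $\ell_\infty$ corresponds to the regulus $[b]=\{[T]:\bar T\in b\}$ contained in $\mathcal S$; $[b]^\star$ denotes the regulus of $\Sigma_\infty^\star$ consisting of the $q^2+1$ lines of the same ruling of the extended hyperbolic quadric (the quadric covered by $[b]$, extended to $\mathrm{PG}(4,q^2)$) that contains the extensions of the lines of $[b]$. Two points of $\ell_\infty$ are conjugate with respect to $b$ if they are interchanged by the unique involutory (semilinear) collineation of $\ell_\infty$ fixing $b$ pointwise. *)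

(* Defs.v *)
From HB Require Import structures.
From mathcomp Require Import all_boot all_order all_algebra all_field.
Set Implicit Arguments. Unset Strict Implicit. Unset Printing Implicit Defensive.
Import GRing.Theory.
Local Open Scope ring_scope.

Definition conjm (L : fieldType) (q : nat) m n (M : 'M[L]_(m, n)) : 'M[L]_(m, n) :=
  map_mx (fun x => x ^+ q) M.

(* Points of l_oo = PG(1,q^2) are nonzero vectors of 'rV_2 (up to scalar,
   compared with (_ == _)%MS).  The Baer subline b(A) is the image of the
   canonical subline PG(1,q) = {[s] : s^q = s} under the projectivity A. *)
Definition in_baer (L : fieldType) (q : nat) (A : 'M[L]_2) (v : 'rV[L]_2) : Prop :=
  v != 0 /\ exists s : 'rV[L]_2, [/\ s != 0, conjm q s = s & (v == s *m A)%MS].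

(* P and Q are conjugate w.r.t. b(A): they are interchanged by an involutory
   semilinear collineation  v |-> v^sigma M  of l_oo fixing b(A) pointwise. *)
Definition b_conjugate (L : fieldType) (q : nat) (A : 'M[L]_2) (P Q : 'rV[L]_2) : Prop :=
  exists (s : {rmorphism L -> L}) (M : 'M[L]_2),
    let f := fun v : 'rV[L]_2 => map_mx s v *m M in
    [/\ M \in unitmx,
        (forall v, v != 0 -> (f (f v) == v)%MS),
        (exists v, v != 0 /\ ~~ (f v == v)%MS),
        (forall v, in_baer q A v -> (f v == v)%MS) &
        ((f P == Q)%MS /\ (f Q == P)%MS)].

(* Sigma_oo^* = PG(3,q^2): nonzero vectors of 'rV_4.  The transversal g is the
   row space of G (and g^q that of conjm q G); the point T of g corresponding
   to bar T = [t] is t *m G, and the extended spread line [T]^* = T T^q. *)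
Definition ext_line (L : fieldType) (q : nat) (G : 'M[L]_(2, 4)) (t : 'rV[L]_2)
  : 'M[L]_(2, 4) := col_mx (t *m G) (conjm q (t *m G)).

(* Points of Sigma_oo = PG(3,q) (rational points) on the lines of [b]:
   the point set of the hyperbolic quadric covered by the regulus [b]. *)
Definition covered_point (L : fieldType) (q : nat) (G : 'M[L]_(2, 4)) (A : 'M[L]_2)
  (X : 'rV[L]_4) : Prop :=
  [/\ X != 0, conjm q X = X & exists t, in_baer q A t /\ (X <= ext_line q G t)%MS].

Definition qform (L : fieldType) (c : 'M[L]_4) (X : 'rV[L]_4) : L :=
  (X *m c *m X^T) 0 0.

(* c (with GF(q)-coefficients) is a quadratic form of PG(3,q) whose
   quadric is exactly the point set covered by [b]. *)
Definition defines_quadric (L : fieldType) (q : nat) (G : 'M[L]_(2, 4)) (A : 'M[L]_2)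
  (c : 'M[L]_4) : Prop :=
  conjm q c = c /\
  forall X : 'rV[L]_4, X != 0 -> conjm q X = X ->
    (qform c X = 0 <-> covered_point q G A X).

(* m is a line of the regulus [b]^*: a line of the extended quadric
   (zero set of c in PG(3,q^2)) belonging to the ruling containing the
   extended lines [T]^*, bar T in b, i.e. equal to or skew to each of them. *)
Definition ext_regulus_line (L : fieldType) (q : nat) (G : 'M[L]_(2, 4)) (A : 'M[L]_2)
  (c : 'M[L]_4) (m : 'M[L]_(2, 4)) : Prop :=
  [/\ \rank m = 2%N,
      (forall X : 'rV[L]_4, (X <= m)%MS -> qform c X = 0) &
      (forall t, in_baer q A t ->
         (m == ext_line q G t)%MS \/ \rank (m :&: ext_line q G t)%MS = 0%N)].

(* Main.v *)
Require Import Defs.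
From HB Require Import structures.
From mathcomp Require Import all_boot all_order all_algebra all_solvable all_field.
From mathcomp Require Import ring zify.
Import GRing.Theory.
Local Open Scope ring_scope.
Set Implicit Arguments. Unset Strict Implicit.

Lemma poly_vanish (L : finFieldType) (p : {poly L}) :
  (size p <= #|L|)%N -> (forall x, p.[x] = 0) -> p = 0.
Proof.
move=> hs hx; apply: (@roots_geq_poly_eq0 _ p (enum L)).
- by apply/allP => x _; rewrite /root hx.
- exact: enum_uniq.
- by rewrite -cardE.
Qed.

Lemma coef3 (L : finFieldType) (e1 e2 e3 : nat) (a b c : L) :
  (e1 < #|L|)%N -> (e2 < #|L|)%N -> (e3 < #|L|)%N ->
  e1 != e2 -> e1 != e3 -> e2 != e3 ->
  (forall x, a * x ^+ e1 + b * x ^+ e2 + c * x ^+ e3 = 0) ->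
  [/\ a = 0, b = 0 & c = 0].
Proof.
move=> h1 h2 h3 d12 d13 d23 hx.
pose p : {poly L} := a *: 'X^e1 + b *: 'X^e2 + c *: 'X^e3.
have hp : p = 0.
  apply: poly_vanish => [|x]; last by rewrite /p !hornerE.
  rewrite /p; apply: leq_trans (size_polyD _ _) _; rewrite geq_max.
  apply/andP; split; last by apply: leq_trans (size_scale_leq _ _) _; rewrite size_polyXn.
  apply: leq_trans (size_polyD _ _) _; rewrite geq_max.
  by apply/andP; split; apply: leq_trans (size_scale_leq _ _) _; rewrite size_polyXn.
have := congr1 (fun r : {poly L} => r`_e1) hp; have := congr1 (fun r : {poly L} => r`_e2) hp.
have := congr1 (fun r : {poly L} => r`_e3) hp.
rewrite /p !coefD !coefZ !coefXn !eqxx !coef0.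
rewrite ![e3 == _]eq_sym [e2 == e1]eq_sym (negbTE d12) (negbTE d13) (negbTE d23).
by rewrite !mulr0 !mulr1 ?addr0 ?add0r => -> -> ->.
Qed.

Definition r2 (L : fieldType) (x y : L) : 'rV[L]_2 :=
  \row_(j < 2) (if j == 0 then x else y).

Lemma I2 (j : 'I_2) : j = 0 \/ j = 1.
Proof. by case: j => [[|[|//]] hj]; [left|right]; apply: val_inj. Qed.

Lemma E0 : widen_ord (leqnSn 1) ord_max = 0 :> 'I_2.
Proof. by apply: val_inj. Qed.
Lemma E1 : ord_max = 1 :> 'I_2.
Proof. by apply: val_inj. Qed.

Lemma r2E (L : fieldType) (v : 'rV[L]_2) : v = r2 (v 0 0) (v 0 1).
Proof.
apply/matrixP => i j; rewrite !mxE ord1.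
by case: j => [[|[|//]] hj] /=; congr (v 0 _); apply: val_inj.
Qed.

Lemma r2_00 (L : fieldType) (x y : L) : r2 x y 0 0 = x.
Proof. by rewrite mxE. Qed.
Lemma r2_01 (L : fieldType) (x y : L) : r2 x y 0 1 = y.
Proof. by rewrite mxE. Qed.

Lemma r2M (L : fieldType) (x y : L) (N : 'M[L]_2) :
  r2 x y *m N = r2 (x * N 0 0 + y * N 1 0) (x * N 0 1 + y * N 1 1).
Proof.
apply/matrixP => i j; rewrite !mxE !big_ord_recr big_ord0 /= add0r !mxE.
by rewrite E0 E1; case: (I2 j) => ->.
Qed.

Lemma r2Z (L : fieldType) (a x y : L) : a *: r2 x y = r2 (a * x) (a * y).
Proof. by apply/matrixP => i j; rewrite !mxE; case: ifP. Qed.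

Lemma r2_eq (L : fieldType) (x y x' y' : L) : r2 x y = r2 x' y' -> x = x' /\ y = y'.
Proof.
move=> h; split; [move: (congr1 (fun v : 'rV[L]_2 => v 0 0) h) | move: (congr1 (fun v : 'rV[L]_2 => v 0 1) h)];
 by rewrite !mxE.
Qed.



Definition qf2 (L : fieldType) (E : 'M[L]_2) (v : 'rV[L]_2) : L := (v *m E *m v^T) 0 0.

Lemma qf2E (L : fieldType) (E : 'M[L]_2) (x y : L) :
  qf2 E (r2 x y) = x * x * E 0 0 + x * y * (E 0 1 + E 1 0) + y * y * E 1 1.
Proof.
rewrite /qf2 r2M !mxE !big_ord_recr big_ord0 /= add0r !mxE /=.
ring.
Qed.

Lemma qf2_zero (L : fieldType) (E : 'M[L]_2) :
  qf2 E (r2 1 0) = 0 -> qf2 E (r2 0 1) = 0 -> qf2 E (r2 1 1) = 0 ->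
  forall v, qf2 E v = 0.
Proof.
rewrite !qf2E => h1 h2 h3 v; rewrite (r2E v) qf2E.
move: h1 h2 h3; rewrite !mul1r !mul0r !add0r !addr0 => h1 h2.
by rewrite h1 h2 !addr0 add0r => ->; rewrite !mulr0 !addr0.
Qed.

Lemma blockq (L : fieldType) (D : 'M[L]_(2 + 2)) (s : 'rV[L]_2) (l m : L) :
  (row_mx (l *: s) (m *: s) *m D *m (row_mx (l *: s) (m *: s))^T) 0 0 =
  l * l * qf2 (ulsubmx D) s + l * m * qf2 (ursubmx D + (dlsubmx D)^T) s
  + m * m * qf2 (drsubmx D) s.
Proof.
rewrite -[D in LHS]submxK tr_row_mx mul_row_block mul_row_col /qf2.
rewrite !(mxE, big_ord_recr, big_ord0) /=.
ring.
Qed.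

Section Conj.
Variables (L : fieldType) (q : nat).
Hypothesis hD : forall x y : L, (x + y) ^+ q = x ^+ q + y ^+ q.
Hypothesis hqq : forall x : L, (x ^+ q) ^+ q = x.
Hypothesis hq0 : (0 < q)%N.

Lemma cjD m n (A B : 'M[L]_(m, n)) : conjm q (A + B) = conjm q A + conjm q B.
Proof. by apply/matrixP => i j; rewrite !mxE hD. Qed.

Lemma cjZ m n (a : L) (A : 'M[L]_(m, n)) : conjm q (a *: A) = a ^+ q *: conjm q A.
Proof. by apply/matrixP => i j; rewrite !mxE exprMn. Qed.

Lemma cj0 m n : conjm q (0 : 'M[L]_(m, n)) = 0.
Proof. by apply/matrixP => i j; rewrite !mxE expr0n; case: q hq0. Qed.

Lemma cjM m n p (A : 'M[L]_(m, n)) (B : 'M[L]_(n, p)) :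
  conjm q (A *m B) = conjm q A *m conjm q B.
Proof.
apply/matrixP => i j; rewrite !mxE.
rewrite (@big_morph _ _ (fun x : L => x ^+ q) 0 +%R 0 +%R); last 2 first.
- exact: hD.
- by rewrite expr0n; case: q hq0.
by apply: eq_bigr => k _; rewrite !mxE exprMn.
Qed.

Lemma cjK m n (A : 'M[L]_(m, n)) : conjm q (conjm q A) = A.
Proof. by apply/matrixP => i j; rewrite !mxE hqq. Qed.

Lemma cj_r2 (x y : L) : conjm q (r2 x y) = r2 (x ^+ q) (y ^+ q).
Proof. by apply/matrixP => i j; rewrite !mxE; case: ifP. Qed.

Lemma cj_eq0 m n (A : 'M[L]_(m, n)) : (conjm q A == 0) = (A == 0).
Proof.
apply/eqP/eqP => [h|->]; last exact: cj0.
by rewrite -[A]cjK h cj0.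
Qed.

Lemma cj_col m1 m2 n (A : 'M[L]_(m1, n)) (B : 'M[L]_(m2, n)) :
  conjm q (col_mx A B) = col_mx (conjm q A) (conjm q B).
Proof. exact: map_col_mx. Qed.

End Conj.

Lemma col_swap (L : fieldType) m1 m2 n (U : 'M[L]_(m1, n)) (V : 'M[L]_(m2, n)) :
  (col_mx U V :=: col_mx V U)%MS.
Proof.
apply: eqmx_trans (eqmx_sym (addsmxE U V)) _.
rewrite addsmxC; exact: addsmxE.
Qed.

Lemma sub_line (L : fieldType) n (X U V : 'rV[L]_n) :
  (X <= col_mx U V)%MS -> exists a b, X = a *: U + b *: V.
Proof.
case/submxP => D ->; rewrite -[D]hsubmxK mul_row_col.
rewrite [lsubmx D]mx11_scalar [rsubmx D]mx11_scalar !mul_scalar_mx.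
by eexists; eexists.
Qed.

Lemma line_sub (L : fieldType) n (U V : 'rV[L]_n) (a b : L) :
  ((a *: U + b *: V)%R <= col_mx U V)%MS.
Proof.
apply/submxP; exists (row_mx a%:M b%:M).
by rewrite mul_row_col !mul_scalar_mx.
Qed.

Lemma cap0 (L : fieldType) m1 m2 n (U : 'M[L]_(m1, n)) (V : 'M[L]_(m2, n)) :
  (forall X : 'rV_n, (X <= U)%MS -> (X <= V)%MS -> X = 0) -> (U :&: V)%MS = 0.
Proof.
move=> h; apply/eqP; rewrite -submx0; apply/row_subP => i.
have := row_sub i (U :&: V)%MS; rewrite sub_capmx => /andP[h1 h2].
by rewrite (h _ h1 h2) sub0mx.
Qed.

Lemma eq_rV (L : fieldType) n (u v : 'rV[L]_n) :
  (u == v)%MS -> exists a, v = a *: u.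
Proof. by case/andP => _ /sub_rVP. Qed.

Lemma frob_add (L : finFieldType) (q : nat) : #|L| = (q ^ 2)%N ->
  forall x y : L, (x + y) ^+ q = x ^+ q + y ^+ q.
Proof.
move=> hL x y; apply: exprDn_pchar.
have [p pr pc] := finPcharP L.
have hab := fin_ring_pchar_abelem pc.
have : p.-nat #|L|.
  by case/and3P: hab => /= pg _ _; move: pg; rewrite /pgroup cardsT.
rewrite hL => hp.
have : p.-nat q by apply: pnat_dvd hp; by rewrite expnS dvdn_mulr.
by rewrite (eq_pnat _ (pcharf_eq pc)).
Qed.

Lemma map_r2 (L : fieldType) (s : {rmorphism L -> L}) (x y : L) :
  map_mx s (r2 x y) = r2 (s x) (s y).
Proof. by apply/matrixP => i j; rewrite !mxE; case: ifP. Qed.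

Lemma r2_neq0 (L : fieldType) (x : L) : r2 x 1 != 0.
Proof. by apply/eqP => /(congr1 (fun v : 'rV[L]_2 => v 0 1)); rewrite !mxE /= => /eqP; rewrite oner_eq0. Qed.

Lemma r2_neq0' (L : fieldType) (y : L) : r2 1 y != 0.
Proof. by apply/eqP => /(congr1 (fun v : 'rV[L]_2 => v 0 0)); rewrite !mxE /= => /eqP; rewrite oner_eq0. Qed.

Section Main.
Variables (L : finFieldType) (q : nat) (A : 'M[L]_2) (P Q : 'rV[L]_2).
Hypothesis hL : #|L| = (q ^ 2)%N.
Hypothesis hA : A \in unitmx.

Lemma hDL : forall x y : L, (x + y) ^+ q = x ^+ q + y ^+ q.
Proof. exact: frob_add hL. Qed.

Lemma hqq : forall x : L, (x ^+ q) ^+ q = x.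
Proof. by move=> x; rewrite -exprM mulnn -hL expf_card. Qed.

Lemma hq0 : (0 < q)%N.
Proof. by case: q hL => // h; have := finNzRing_gt1 L; rewrite h. Qed.

Lemma conj_key : b_conjugate q A P Q ->
  exists k, Q = k *: (conjm q (P *m invmx A) *m A).
Proof.
case=> s [M] /= [hM _ [v0 [hv0 hnt]] hfix [hfP _]].
set B := invmx A.
pose N := map_mx s A *m M *m B.
have fE : forall v : 'rV[L]_2, map_mx s v *m M = map_mx s (v *m B) *m N *m A.
  move=> v; rewrite /N -{1}(mulmxKV hA v) map_mxM.
  by rewrite !mulmxA mulmxKV.
have fixz : forall z : 'rV[L]_2, z != 0 -> conjm q z = z -> (map_mx s z *m N == z)%MS.
  move=> z hz hzz.
  have hzA : z *m A != 0.
    by apply: contra hz => /eqP h; rewrite -(mulmxK hA z) h mul0mx.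
  have := hfix (z *m A) (conj hzA (ex_intro _ z (And3 hz hzz _))).
  rewrite submx_refl /= => /(_ isT).
  rewrite fE mulmxK // => /eqmxP /(eqmxMr B).
  by rewrite !mulmxK // => /eqmxP.
have hrat : forall x y : L, x ^+ q = x -> y ^+ q = y -> r2 x y != 0 ->
    exists a, r2 x y = a *: r2 (s x * N 0 0 + s y * N 1 0) (s x * N 0 1 + s y * N 1 1).
  move=> x y hx hy hxy.
  have := fixz (r2 x y) hxy; rewrite cj_r2 hx hy map_r2 => /(_ erefl) /eq_rV [a ha].
  by exists a; rewrite ha r2M.
have h0q : (0 : L) ^+ q = 0 by rewrite expr0n; case: q hq0.
have [a1] := hrat 1 0 (expr1n _ _) h0q (r2_neq0' _).
rewrite r2Z => /r2_eq [].
rewrite rmorph1 rmorph0 !mul1r !mul0r !addr0 => e1 e2.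
have [a2] := hrat 0 1 h0q (expr1n _ _) (r2_neq0 _).
rewrite r2Z => /r2_eq [].
rewrite rmorph1 rmorph0 !mul1r !mul0r !add0r => e3 e4.
have [a3] := hrat 1 1 (expr1n _ _) (expr1n _ _) (r2_neq0 _).
rewrite r2Z => /r2_eq [].
rewrite rmorph1 !mul1r => e5 e6.
have a1n : a1 != 0 by apply: contra_eq_neq e1 => ->; rewrite mul0r oner_neq0.
have a2n : a2 != 0 by apply: contra_eq_neq e4 => ->; rewrite mul0r oner_neq0.
have /eqP := e2; rewrite eq_sym mulf_eq0 (negbTE a1n) /= => /eqP n01.
have /eqP := e3; rewrite eq_sym mulf_eq0 (negbTE a2n) /= => /eqP n10.
move: e5 e6; rewrite n01 n10 addr0 add0r => e5 e6.
have a3n : a3 != 0 by apply: contra_eq_neq e5 => ->; rewrite mul0r oner_neq0.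
have n11 : N 1 1 = N 0 0 by apply: (mulfI a3n); rewrite -e5 -e6.
set n := N 0 0 in e1 e5 n11.
have nn : n != 0 by apply: contra_eq_neq e1 => ->; rewrite mulr0 oner_neq0.
have hN : forall w : 'rV[L]_2, w *m N = n *: w.
  move=> w; rewrite (r2E w) r2M r2Z n01 n10 n11 !mulr0 !addr0 add0r.
  by rewrite -/n mulrC [_ * n]mulrC.
have fsE : forall v : 'rV[L]_2, map_mx s v *m M = n *: (map_mx s (v *m B) *m A).
  by move=> v; rewrite fE hN scalemxAl.
have srat : forall x : L, x ^+ q = x -> s x = x.
  move=> x hx; have := fixz (r2 x 1) (r2_neq0 _).
  rewrite cj_r2 hx expr1n map_r2 rmorph1 hN => /(_ erefl) /eq_rV [a].
  rewrite !r2Z => /r2_eq [ex e1'].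
  have an1 : a * n = 1 by rewrite e1' mulr1.
  by rewrite {2}ex mulrA an1 mul1r.
have hD := frob_add hL.
have [x0 hx0] : exists x0, s x0 != x0.
  case: (boolP [exists x, s x != x]) => [/existsP //|/existsPn hid].
  have sid : forall w : 'rV[L]_2, map_mx s w = w.
    by move=> w; apply/matrixP => i j; rewrite mxE; apply/eqP; rewrite -[_ == _]negbK hid.
  move: hnt; rewrite fsE sid mulmxKV //.
  by move/eqmxP: (eqmx_scale v0 nn) => ->.
have key : forall x, (s x - x) * (s x - x ^+ q) = 0.
  move=> x.
  have htr : s (x + x ^+ q) = x + x ^+ q by apply: srat; rewrite hD hqq addrC.
  have hnm : s (x * x ^+ q) = x * x ^+ q by apply: srat; rewrite exprMn hqq mulrC.
  have e : x * x - (x + x ^+ q) * x + x * x ^+ q = 0 by ring.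
  have := congr1 s e; rewrite rmorph0 rmorphD rmorphB hnm !rmorphM htr => <-.
  ring.
have key2 : forall x, s x = x \/ s x = x ^+ q.
  move=> x; have /eqP := key x; rewrite mulf_eq0 !subr_eq0.
  by case/orP => /eqP; [left|right].
have hs : forall x, s x = x ^+ q.
  have sx0 : s x0 = x0 ^+ q by case: (key2 x0) => // h; rewrite h eqxx in hx0.
  move=> x; case: (key2 x) => // sx.
  case: (eqVneq (x ^+ q) x) => [-> //|hxq].
  case: (key2 (x + x0)); rewrite rmorphD sx sx0.
    by move/addrI => h; rewrite sx0 h eqxx in hx0.
  by rewrite hD => /addIr h; rewrite -h eqxx in hxq.
have fscj : forall w : 'rV[L]_2, map_mx s w = conjm q w.
  by move=> w; apply/matrixP => i j; rewrite !mxE hs.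
have [a ha] := eq_rV hfP.
by exists (a * n); rewrite ha fsE fscj scalerA.
Qed.

Lemma hq2 : (2 <= q)%N.
Proof.
case: q hL => [|[|//]] h; have := finNzRing_gt1 L; rewrite h //.
Qed.

Lemma coef_q (a b c : L) :
  (forall l : L, l * l * a + l * l ^+ q * b + l ^+ q * l ^+ q * c = 0) ->
  [/\ a = 0, b = 0 & c = 0].
Proof.
move=> h; have q2 := hq2.
case: (ltnP q 3) => hq3.
  have eq2 : q = 2%N by apply/eqP; rewrite eqn_leq q2 -ltnS hq3.
  have e4 : #|L| = 4%N by rewrite hL eq2.
  apply: (@coef3 L 2 3 1) => //; rewrite ?e4 // => l.
  have := h l; rewrite eq2 -!exprS -exprD -[(2 + 2)%N]/4%N -e4 expf_card.
  by rewrite mulrC [b * _]mulrC [c * _]mulrC.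
apply: (@coef3 L 2 q.+1 (q + q)); rewrite ?hL -?mulnn; try by apply/eqP; lia.
- nia.
- nia.
- move=> l; have := h l; rewrite -exprD -exprS -expr2.
  by rewrite mulrC [b * _]mulrC [c * _]mulrC.
Qed.

Lemma Hunit (G : 'M[L]_(2, 4)) : \rank (col_mx G (conjm q G)) = 4%N ->
  (col_mx G (conjm q G) : 'M_4) \in unitmx.
Proof. by move=> h; rewrite -row_free_unit /row_free h. Qed.

Lemma coordinj (G : 'M[L]_(2, 4)) (y1 z1 y2 z2 : 'rV[L]_2) :
  \rank (col_mx G (conjm q G)) = 4%N ->
  y1 *m G + z1 *m conjm q G = y2 *m G + z2 *m conjm q G -> y1 = y2 /\ z1 = z2.
Proof.
move=> /Hunit hH; rewrite -!mul_row_col => h.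
have := congr1 (mulmx^~ (invmx (col_mx G (conjm q G) : 'M_4))) h.
by rewrite !mulmxK // => h2; apply: eq_row_mx.
Qed.

Lemma quad_key (G : 'M[L]_(2, 4)) (c : 'M[L]_4) :
  \rank (col_mx G (conjm q G)) = 4%N -> defines_quadric q G A c ->
  forall (al be : L) (v : 'rV[L]_2),
  qform c (al *: (v *m A *m G) + be *: (v *m conjm q A *m conjm q G)) = 0.
Proof.
move=> hG [_ hc] al be v.
pose C : 'M[L]_(2 + 2, 4) := col_mx (A *m G) (conjm q A *m conjm q G).
pose D := C *m c *m C^T.
have qC : forall y z : 'rV[L]_2,
    qform c (row_mx y z *m C) = (row_mx y z *m D *m (row_mx y z)^T) 0 0.
  by move=> y z; rewrite /qform /D trmx_mul !mulmxA.
have rowC : forall y z : 'rV[L]_2,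
    row_mx y z *m C = y *m A *m G + z *m conjm q A *m conjm q G.
  by move=> y z; rewrite mul_row_col !mulmxA.
have cjM' := cjM hDL hq0.
have hcov : forall (l : L) (s : 'rV[L]_2), s != 0 -> conjm q s = s ->
    qform c (row_mx (l *: s) (l ^+ q *: s) *m C) = 0.
  move=> l s hs hss.
  case: (eqVneq l 0) => [->|hl].
    by rewrite expr0n; case: q hq0 => // n _; rewrite !scale0r row_mx0 mul0mx /qform !mul0mx mxE.
  set W := s *m A *m G.
  have hX : row_mx (l *: s) (l ^+ q *: s) *m C = l *: W + l ^+ q *: conjm q W.
    by rewrite rowC /W !cjM' hss -!scalemxAl.
  have hsA : s *m A != 0.
    by apply: contra hs => /eqP h; rewrite -(mulmxK hA s) h mul0mx.
  have hX0 : l *: W + l ^+ q *: conjm q W != 0.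
    rewrite -hX rowC; apply/eqP => h0.
    have [h1 _] := @coordinj G _ _ 0 0 hG (etrans h0 (esym (etrans (congr2 +%R (mul0mx _ _) (mul0mx _ _)) (addr0 0)))).
    move: hsA; rewrite -scalemxAl in h1.
    by move/eqP: h1; rewrite scalemx_eq0 (negbTE hl) /= => /eqP ->; rewrite eqxx.
  have hXc : conjm q (l *: W + l ^+ q *: conjm q W) = l *: W + l ^+ q *: conjm q W.
    by rewrite (cjD hDL) !cjZ (cjK hqq) hqq addrC.
  rewrite hX; apply/(hc _ hX0 hXc).2; split => //.
  exists (s *m A); split; last exact: line_sub.
  by split => //; exists s; split => //; rewrite submx_refl.
have h3 : forall s : 'rV[L]_2, s != 0 -> conjm q s = s ->
    [/\ qf2 (ulsubmx D) s = 0, qf2 (ursubmx D + (dlsubmx D)^T) s = 0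
       & qf2 (drsubmx D) s = 0].
  by move=> s hs hss; apply: coef_q => l; rewrite -blockq -qC; exact: hcov.
have h0q : (0 : L) ^+ q = 0 by rewrite expr0n; case: q hq0.
have [a1 b1 c1] : _ := h3 (r2 1 0) (r2_neq0' _) ltac:(by rewrite cj_r2 expr1n h0q).
have [a2 b2 c2] : _ := h3 (r2 0 1) (r2_neq0 _) ltac:(by rewrite cj_r2 expr1n h0q).
have [a3 b3 c3] : _ := h3 (r2 1 1) (r2_neq0 _) ltac:(by rewrite cj_r2 expr1n).
rewrite !scalemxAl -rowC qC blockq.
by rewrite (qf2_zero a1 a2 a3) (qf2_zero b1 b2 b3) (qf2_zero c1 c2 c3) !mulr0 !addr0.
Qed.

Lemma notinb (s : {rmorphism L -> L}) (M : 'M[L]_2) (R R' : 'rV[L]_2) :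
  (forall v, in_baer q A v -> (map_mx s v *m M == v)%MS) ->
  (map_mx s R *m M == R')%MS -> R != 0 -> ~~ (R == R')%MS ->
  forall t (a l : L), in_baer q A t -> a *: R = l *: t -> a = 0.
Proof.
move=> hfix hfR hR hRR' t a l [ht [s0 [hs0 hss0 ht0]]] hal.
apply/eqP; apply/negPn/negP => ha.
have hl : l != 0.
  apply: contra_neq hR => hl0; move: hal; rewrite hl0 scale0r => /eqP.
  by rewrite scalemx_eq0 (negbTE ha) /= => /eqP.
have eRt : (R :=: t)%MS.
  apply: eqmx_trans (eqmx_sym (eqmx_scale _ ha)) _.
  by rewrite hal; exact: eqmx_scale.
have hRb : in_baer q A R.
  split => //; exists s0; split => //.
  by apply/eqmxP; apply: eqmx_trans eRt _; apply/eqmxP.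
have := hfix _ hRb => /eqmxP e1; move/eqmxP: hfR => e2.
by move: hRR'; apply/negP/negPn; apply/eqmxP; apply: eqmx_trans (eqmx_sym e1) e2.
Qed.

Lemma gen_line (G : 'M[L]_(2, 4)) (c : 'M[L]_4) (m : 'M[L]_(1 + 1, 4)) (y z : 'rV[L]_2) :
  \rank (col_mx G (conjm q G)) = 4%N ->
  (m :=: col_mx (y *m G) (z *m conjm q G))%MS -> y != 0 -> z != 0 ->
  (forall t (a l : L), in_baer q A t -> a *: y = l *: t -> a = 0) ->
  (forall t (a l : L), in_baer q A t -> a *: conjm q z = l *: t -> a = 0) ->
  (forall a b : L, qform c (a *: (y *m G) + b *: (z *m conjm q G)) = 0) ->
  ext_regulus_line q G A c m.
Proof.
move=> hG em hy hz ny nz hq.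
have cjM' := cjM hDL hq0.
have key : forall (a b a' b' : L) (t : 'rV[L]_2), in_baer q A t ->
    a *: (y *m G) + b *: (z *m conjm q G) = a' *: (t *m G) + b' *: conjm q (t *m G) ->
    a = 0 /\ b = 0.
  move=> a b a' b' t ht; rewrite cjM' !scalemxAl => /(coordinj hG) [h1 h2].
  split; first exact: ny h1.
  have := congr1 (@conjm L q 1 2) h2; rewrite !cjZ (cjK hqq) => /(nz _ _ _ ht) /eqP.
  by rewrite expf_eq0 hq0 => /eqP.
have nz0 : forall (a b : L), a *: (y *m G) + b *: (z *m conjm q G) = 0 -> a = 0 /\ b = 0.
  move=> a b; rewrite !scalemxAl -[0](addr0 0) -{1}(mul0mx _ G) -(mul0mx _ (conjm q G)).
  move/(coordinj hG) => [/eqP h1 /eqP h2]; move: h1 h2.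
  by rewrite !scalemx_eq0 (negbTE hy) (negbTE hz) !orbF => /eqP -> /eqP ->.
split.
- rewrite em -addsmxE mxrank_disjoint_sum.
    have yG0 : y *m G != 0.
      apply/eqP => h0; have [h1 _] : (1 : L) = 0 /\ (0 : L) = 0.
        by apply: nz0; rewrite h0 !scale0r scaler0 addr0.
      by move/eqP: h1; rewrite oner_eq0.
    have zG0 : z *m conjm q G != 0.
      apply/eqP => h0; have [_ h1] : (0 : L) = 0 /\ (1 : L) = 0.
        by apply: nz0; rewrite h0 !scale0r scaler0 addr0.
      by move/eqP: h1; rewrite oner_eq0.
    by rewrite !rank_rV yG0 zG0.
  apply: cap0 => X /sub_rVP [a ->] /sub_rVP [b hab].
  have [ha0 _] : a = 0 /\ - b = 0 by apply: nz0; rewrite hab scaleNr subrr.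
  by rewrite ha0 scale0r.
- by move=> X; rewrite em => /sub_line [a [b ->]]; exact: hq.
- move=> t ht; right; apply/eqP; rewrite mxrank_eq0; apply/eqP; apply: cap0 => X.
  rewrite em => /sub_line [a [b ->]] /sub_line [a' [b' h]].
  by have [-> ->] := key _ _ _ _ _ ht h; rewrite !scale0r addr0.
Qed.
End Main.

Unset Implicit Arguments.
Set Strict Implicit.

Theorem theorem3p2 (L : finFieldType) (q : nat) (G : 'M[L]_(2, 4))
  (A : 'M[L]_2) (c : 'M[L]_4) (P Q : 'rV[L]_2) :
  #|L| = (q ^ 2)%N ->
  \rank (col_mx G (conjm q G)) = 4%N ->
  A \in unitmx ->
  defines_quadric q G A c ->
  P != 0 -> Q != 0 -> ~~ (P == Q)%MS ->
  b_conjugate q A P Q ->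
  ext_regulus_line q G A c (col_mx (P *m G) (conjm q (Q *m G))) /\
  ext_regulus_line q G A c (col_mx (conjm q (P *m G)) (Q *m G)).
Proof.
move=> hL hG hA hc hP hQ hPQ hconj.
have hconj' := hconj.
have [k hk] := conj_key hL hA hconj.
case: hconj' => s [M] /= [_ _ _ hfix [hfP hfQ]].
have [u hPu hQu] : exists2 u, P = u *m A & Q = k *: (conjm q u *m A).
  by exists (P *m invmx A); rewrite ?mulmxKV.
have hq0' := hq0 hL; have hqq' := hqq hL; have hD := hDL hL.
have cjM' := cjM hD hq0'.
have nP := notinb hfix hfP hP hPQ.
have hQP : ~~ (Q == P)%MS.
  by apply: contra hPQ => /eqmxP e; apply/eqmxP; apply: eqmx_sym.
have nQ := notinb hfix hfQ hQ hQP.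
split.
- apply: (@gen_line L q A hL G c _ P (conjm q Q) hG) => //.
  + by rewrite cjM'; exact: eqmx_refl.
  + by rewrite (cj_eq0 hqq' hq0').
  + by rewrite (cjK hqq').
  + move=> a b; rewrite hQu cjZ cjM' (cjK hqq') -scalemxAl scalerA hPu.
    exact: quad_key.
- apply: (@gen_line L q A hL G c _ Q (conjm q P) hG) => //.
  + rewrite cjM'; exact: col_swap.
  + by rewrite (cj_eq0 hqq' hq0').
  + by rewrite (cjK hqq').
  + move=> a b; rewrite hQu hPu !cjM' -!scalemxAl scalerA.
    exact: quad_key.
Qed.
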